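(* For every bipartite state $\rho$ on $\mathcal{H}^A\otimes\mathcal{H}^B$ ($\dim\mathcal{H}^A=m$, $\dim\mathcal{H}^B=n$), $D_P(\rho)\le D_G(\rho)$, where $D_P(\rho)=\min_P\|\mathcal{T}-P\mathcal{T}\|^2$ (minimum over rank-$(m-1)$ orthogonal projections $P$ on $\mathbb{R}^{m^2-1}$, Frobenius norm) and $D_G(\rho)=\min_{\chi}\mathrm{Tr}(\rho-\chi)^2$ with the minimum over all zero-discord states $\chi$.
   Context: Generators $\hat\lambda_i^A$ ($i=1,\dots,m^2-1$) of $SU(m)$ and $\hat\lambda_j^B$ of $SU(n)$ are Hermitian, traceless, with $\mathrm{Tr}(\hat\lambda_i\hat\lambda_j)=2\delta_{ij}$. For a state $\rho$, $x_i=\frac{m}{2}\mathrm{Tr}[(\hat\lambda_i^A\otimes\mathbb{I})\rho]$, $t_{ij}=\frac{mn}{4}\mathrm{Tr}[(\hat\lambda_i^A\otimes\hat\lambda_j^B)\rho]$, $T=(t_{ij})$, and the left-correlation matrix is $\mathcal{T}=\sqrt{\frac{2}{m^2n}}\begin{pmatrix}\vec{x} & \sqrt{\frac{2}{n}}T\end{pmatrix}$. A state $\chi$ is zero-discord (classical-quantum) if $\chi=\sum_{k=1}^m p_k|k\rangle\langle k|\otimes\rho_k^B$ for some orthonormal basis $\{|k\rangle\}$ of $\mathcal{H}^A$, probabilities $p_k$ and states $\rho_k^B$ on $\mathcal{H}^B$. *)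

(* Defs.v *)
From HB Require Import structures.
From mathcomp Require Import all_boot all_order all_algebra.
From mathcomp Require Import complex mxtens.
From mathcomp Require Import boolp classical_sets reals.

Set Implicit Arguments.
Unset Strict Implicit.
Unset Printing Implicit Defensive.

Import Order.TTheory GRing.Theory Num.Theory.
Local Open Scope ring_scope.
Local Open Scope classical_set_scope.

Section QDefs.
Variable R : realType.
Local Notation C := (R[i]).

Definition adjmx (p q : nat) (A : 'M[C]_(p, q)) : 'M[C]_(q, p) :=
  (map_mx Num.conj A)^T.

Definition hermitian (p : nat) (A : 'M[C]_p) : Prop := adjmx A = A.

Definition psd (p : nat) (A : 'M[C]_p) : Prop :=
  forall v : 'cV[C]_p, 0 <= (adjmx v *m A *m v) 0 0.

Definition is_state (p : nat) (rho : 'M[C]_p) : Prop :=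
  hermitian rho /\ psd rho /\ \tr rho = 1.

Definition su_generators (p : nat) (lam : 'I_(p ^ 2 - 1) -> 'M[C]_p) : Prop :=
  (forall i, hermitian (lam i)) /\ (forall i, \tr (lam i) = 0) /\
  (forall i j, \tr (lam i *m lam j) = (2 * (i == j)%:R)).

(* zero-discord (classical-quantum) state on H^A (dim m) (x) H^B (dim n):
   chi = sum_k p_k |k><k| (x) rho_k, with {|k>} the columns of a unitary U *)
Definition zero_discord (m n : nat) (chi : 'M[C]_(m * n)) : Prop :=
  exists (U : 'M[C]_m) (p : 'I_m -> R) (rhoB : 'I_m -> 'M[C]_n),
    adjmx U *m U = 1%:M /\
    (forall k, 0 <= p k) /\ \sum_k p k = 1 /\
    (forall k, is_state (rhoB k)) /\
    chi = \sum_k ((p k)%:C%C *: ((col k U *m adjmx (col k U)) *t rhoB k)).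

Definition xvec (m n : nat) (lamA : 'I_(m ^ 2 - 1) -> 'M[C]_m)
  (rho : 'M[C]_(m * n)) : 'cV[R]_(m ^ 2 - 1) :=
  \col_i (m%:R / 2 * complex.Re (\tr ((lamA i *t (1%:M : 'M[C]_n)) *m rho))).

Definition tmat (m n : nat) (lamA : 'I_(m ^ 2 - 1) -> 'M[C]_m)
  (lamB : 'I_(n ^ 2 - 1) -> 'M[C]_n) (rho : 'M[C]_(m * n))
  : 'M[R]_(m ^ 2 - 1, n ^ 2 - 1) :=
  \matrix_(i, j) ((m * n)%:R / 4 *
                  complex.Re (\tr ((lamA i *t lamB j) *m rho))).

Definition left_corr (m n : nat) (lamA : 'I_(m ^ 2 - 1) -> 'M[C]_m)
  (lamB : 'I_(n ^ 2 - 1) -> 'M[C]_n) (rho : 'M[C]_(m * n))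
  : 'M[R]_(m ^ 2 - 1, 1 + (n ^ 2 - 1)) :=
  Num.sqrt (2 / (m ^ 2 * n)%:R) *:
    row_mx (@xvec m n lamA rho) (Num.sqrt (2 / n%:R) *: tmat lamA lamB rho).

Definition frob2 (p q : nat) (A : 'M[R]_(p, q)) : R :=
  \sum_i \sum_j A i j ^+ 2.

Definition orth_proj (p r : nat) (P : 'M[R]_p) : Prop :=
  P^T = P /\ P *m P = P /\ \rank P = r.

Definition D_P (m n : nat) (lamA : 'I_(m ^ 2 - 1) -> 'M[C]_m)
  (lamB : 'I_(n ^ 2 - 1) -> 'M[C]_n) (rho : 'M[C]_(m * n)) : R :=
  inf [set d | exists P : 'M[R]_(m ^ 2 - 1), orth_proj (m - 1) P /\
          d = frob2 (left_corr lamA lamB rho - P *m left_corr lamA lamB rho)].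

Definition D_G (m n : nat) (rho : 'M[C]_(m * n)) : R :=
  inf [set d | exists chi : 'M[C]_(m * n), zero_discord chi /\
          d = complex.Re (\tr ((rho - chi) *m (rho - chi)))].

End QDefs.

(* Main.v *)
Require Import Defs.
From HB Require Import structures.
From mathcomp Require Import all_boot all_order all_algebra.
From mathcomp Require Import complex mxtens.
From mathcomp Require Import boolp classical_sets reals.
From mathcomp Require Import ring lra zify.
Set Implicit Arguments.
Unset Strict Implicit.
Unset Printing Implicit Defensive.
Import Order.TTheory GRing.Theory Num.Theory.
Local Open Scope ring_scope.

Section Aux.
Variable R : realType.
Local Notation C := (R[i]).

Lemma adjmxE p q (A : 'M[C]_(p, q)) i j : adjmx A i j = Num.conj (A j i).
Proof. by rewrite !mxE. Qed.

Lemma adjmxK p q (A : 'M[C]_(p, q)) : adjmx (adjmx A) = A.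
Proof. by apply/matrixP=> i j; rewrite !mxE conjCK. Qed.

Lemma adjmxD p q (A B : 'M[C]_(p, q)) : adjmx (A + B) = adjmx A + adjmx B.
Proof. by apply/matrixP=> i j; rewrite !mxE rmorphD. Qed.

Lemma adjmxB p q (A B : 'M[C]_(p, q)) : adjmx (A - B) = adjmx A - adjmx B.
Proof. by apply/matrixP=> i j; rewrite !mxE rmorphB. Qed.

Lemma adjmx_sum p q I (r : seq I) (F : I -> 'M[C]_(p, q)) :
  adjmx (\sum_(k <- r) F k) = \sum_(k <- r) adjmx (F k).
Proof.
apply/matrixP=> i j; rewrite adjmxE !summxE rmorph_sum.
by apply: eq_bigr=> k _; rewrite adjmxE.
Qed.

Lemma adjmxZR p q (c : R) (A : 'M[C]_(p, q)) :
  adjmx ((c%:C)%C *: A) = (c%:C)%C *: adjmx A.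
Proof. by apply/matrixP=> i j; rewrite !mxE rmorphM /=; congr (_ * _); exact: conjc_real. Qed.

Lemma adjmxM p q r (A : 'M[C]_(p, q)) (B : 'M[C]_(q, r)) :
  adjmx (A *m B) = adjmx B *m adjmx A.
Proof. by rewrite /adjmx map_mxM trmx_mul. Qed.

Lemma adjmx1 p : adjmx (1%:M : 'M[C]_p) = 1%:M.
Proof. by rewrite /adjmx map_mx1 trmx1. Qed.

Lemma adjmx_tens p q r s (A : 'M[C]_(p, q)) (B : 'M[C]_(r, s)) :
  adjmx (A *t B) = adjmx A *t adjmx B.
Proof. by rewrite /adjmx (map_mxT Num.conj) trmx_tens. Qed.

Lemma tr_adjmx p (A : 'M[C]_p) : \tr (adjmx A) = Num.conj (\tr A).
Proof. by rewrite /mxtrace rmorph_sum; apply: eq_bigr=> i _; rewrite adjmxE. Qed.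

Lemma tr_tens p q (A : 'M[C]_p) (B : 'M[C]_q) : \tr (A *t B) = \tr A * \tr B.
Proof. by rewrite /mxtrace mulr_sum; apply: eq_bigr=> i _; rewrite mxE. Qed.

Lemma Re_conj (z : C) : complex.Re (Num.conj z) = complex.Re z.
Proof. by case: z. Qed.

Lemma Re_realM (c : R) (z : C) : complex.Re ((c%:C)%C * z) = c * complex.Re z.
Proof. by case: z=> a b /=; rewrite mul0r subr0. Qed.

Definition ip p (A B : 'M[C]_p) : R := complex.Re (\tr (adjmx A *m B)).

Lemma ipC p (A B : 'M[C]_p) : ip A B = ip B A.
Proof. by rewrite /ip -Re_conj -tr_adjmx adjmxM adjmxK. Qed.

Lemma ipDr p (A B D : 'M[C]_p) : ip A (B + D) = ip A B + ip A D.
Proof. by rewrite /ip mulmxDr mxtraceD raddfD. Qed.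

Lemma ipNr p (A B : 'M[C]_p) : ip A (- B) = - ip A B.
Proof. by rewrite /ip mulmxN linearN raddfN. Qed.

Lemma ipBr p (A B D : 'M[C]_p) : ip A (B - D) = ip A B - ip A D.
Proof. by rewrite ipDr ipNr. Qed.

Lemma ipZr p (A B : 'M[C]_p) c : ip A ((c%:C)%C *: B) = c * ip A B.
Proof. by rewrite /ip -scalemxAr mxtraceZ Re_realM. Qed.

Lemma ip_sumr p I (r : seq I) (A : 'M[C]_p) (F : I -> 'M[C]_p) :
  ip A (\sum_(k <- r) F k) = \sum_(k <- r) ip A (F k).
Proof.
elim/big_rec2: _ => [|k x y _ <-]; last by rewrite ipDr.
by rewrite /ip mulmx0 mxtrace0.
Qed.

Lemma ip_ge0 p (A : 'M[C]_p) : 0 <= ip A A.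
Proof.
rewrite /ip /mxtrace raddf_sum /=; apply: sumr_ge0=> i _.
rewrite mxE raddf_sum /=; apply: sumr_ge0=> j _.
rewrite adjmxE mulrC.
have := mul_conjC_ge0 (A j i); rewrite lecE => /andP[_].
by [].
Qed.

Lemma bessel p (I : finType) (f : I -> 'M[C]_p) (D : 'M[C]_p) :
  (forall a b, ip (f a) (f b) = (a == b)%:R) ->
  \sum_a (ip (f a) D) ^+ 2 <= ip D D.
Proof.
move=> ortho.
pose c a := ip (f a) D.
pose S := \sum_a (c a)%:C%C *: f a.
have ipS : forall X, ip S X = \sum_a c a * ip (f a) X.
  move=> X; rewrite ipC ip_sumr; apply: eq_bigr=> a _.
  by rewrite ipZr ipC.
have h1 : ip S D = \sum_a c a ^+ 2.
  by rewrite ipS; apply: eq_bigr=> a _; rewrite expr2.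
have h2 : ip S S = \sum_a c a ^+ 2.
  rewrite ipS; apply: eq_bigr=> a _; rewrite ip_sumr.
  rewrite (bigD1 a) //= big1 ?addr0.
    by rewrite ipZr ortho eqxx mulr1 expr2.
  by move=> b nba; rewrite ipZr ortho eq_sym (negbTE nba) mulr0.
have eDS : ip (D - S) (D - S) = ip D D - ip S D - (ip S D - ip S S).
  by rewrite ipBr [ip (D - S) D]ipC [ip (D - S) S]ipC !ipBr [ip D S]ipC.
have := ip_ge0 (D - S).
by rewrite eDS h1 h2 subrr subr0 subr_ge0.
Qed.

End Aux.

Section Proj.
Variable R : realType.

Lemma rv_norm0 N (w : 'rV[R]_N) : w *m w^T = 0 -> w = 0.
Proof.
move=> h; have := congr1 (fun M : 'M[R]_1 => M 0 0) h; rewrite !mxE => /eqP.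
rewrite psumr_eq0; last by move=> j _; rewrite mxE -expr2 sqr_ge0.
move=> /allP H; apply/matrixP=> i j; rewrite (ord1 i) mxE.
have := H j (mem_index_enum j); rewrite mxE -expr2 sqrf_eq0.
by move/eqP.
Qed.

Lemma AAT_unit r N (A : 'M[R]_(r, N)) : row_free A -> A *m A^T \in unitmx.
Proof.
move=> fA; rewrite -row_free_unit; apply: inj_row_free=> v hv.
have hw : (v *m A) *m (v *m A)^T = 0.
  by rewrite trmx_mul mulmxA -(mulmxA v) hv mul0mx.
have := rv_norm0 hw => /eqP; rewrite mulmx_free_eq0 //; by move/eqP.
Qed.

Lemma ext_space m N (V : 'M[R]_(m, N)) k : (\rank V + k <= N)%N ->
  exists W : 'M[R]_N, (V <= W)%MS /\ \rank W = (\rank V + k)%N.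
Proof.
elim: k=> [|k IH] hk.
  by exists <<V>>%MS; split; rewrite genmxE ?addn0.
have [W [VW rW]] : exists W : 'M[R]_N, (V <= W)%MS /\ \rank W = (\rank V + k)%N.
  by apply: IH; move: hk; rewrite addnS; apply: ltnW.
have : ~~ (1%:M <= W)%MS.
  apply/negP=> h; have := mxrankS h; rewrite mxrank1 rW.
  by move: hk; rewrite addnS => /leq_trans h1 /h1; rewrite ltnn.
move=> /row_subPn [i ni]; set v := row i 1%:M in ni.
exists (W + v)%MS; split; first exact: submx_trans VW (addsmxSl _ _).
apply/eqP; rewrite eqn_leq; apply/andP; split.
  apply: leq_trans (mxrank_adds_leqif W v) _.
  by rewrite rW addnS -[X in (_ <= X)%N]addn1 leq_add2l rank_leq_row.
rewrite addnS -rW.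
have := mxrank_leqif_sup (addsmxSl W v).
move=> /leqifP; case: ifP=> // h.
by move: ni; rewrite (submx_trans (addsmxSr W v) h).
Qed.

Lemma proj_exists m N d (V : 'M[R]_(m, N)) : (\rank V <= d <= N)%N ->
  exists P : 'M[R]_N, [/\ P^T = P, P *m P = P, \rank P = d & V *m P = V].
Proof.
move=> /andP[h1 h2].
have := @ext_space m N V (d - \rank V); rewrite subnKC // => /(_ h2) [W [VW rW]].
pose A := row_base W.
have fA : row_free A by exact: row_base_free.
have rA : \rank A = d by rewrite /A eq_row_base.
have VA : (V <= A)%MS by rewrite /A eq_row_base.
clearbody A.
have uA := AAT_unit fA.
pose G := invmx (A *m A^T).
pose P := A^T *m G *m A.
have AP : A *m P = A by rewrite /P !mulmxA mulmxV // mul1mx.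
exists P; split.
- by rewrite /P !trmx_mul trmxK /G trmx_inv trmx_mul trmxK mulmxA.
- by rewrite {1}/P -!mulmxA AP /P mulmxA.
- apply/eqP; rewrite eqn_leq; apply/andP; split.
    by rewrite -rA mxrankM_maxr.
  by rewrite -{1}rA -{1}AP mxrankM_maxr.
- by move: VA => /submxP [X ->]; rewrite -mulmxA AP.
Qed.
End Proj.

Section Frob.
Variable R : realType.
Local Notation C := (R[i]).

Lemma frob2_ge0 p q (A : 'M[R]_(p, q)) : 0 <= frob2 A.
Proof. by apply: sumr_ge0=> i _; apply: sumr_ge0=> j _; apply: sqr_ge0. Qed.

Lemma frob2_tr p q (A : 'M[R]_(p, q)) : frob2 A = \tr (A *m A^T).
Proof.
apply: eq_bigr=> i _; rewrite mxE; apply: eq_bigr=> j _.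
by rewrite !mxE expr2.
Qed.

Lemma frob2_idem N q (P : 'M[R]_N) (X : 'M[R]_(N, q)) :
  P^T = P -> P *m P = P -> frob2 (P *m X) = \tr (P *m (X *m X^T)).
Proof.
move=> sP iP; rewrite frob2_tr trmx_mul sP !mulmxA mxtrace_mulC !mulmxA iP.
by rewrite -mulmxA.
Qed.

Lemma frob2_proj N q (P : 'M[R]_N) (X : 'M[R]_(N, q)) :
  P^T = P -> P *m P = P -> frob2 ((1%:M - P) *m X) <= frob2 X.
Proof.
move=> sP iP.
have sQ : (1%:M - P)^T = 1%:M - P by rewrite linearB /= trmx1 sP.
have iQ : (1%:M - P) *m (1%:M - P) = 1%:M - P.
  by rewrite mulmxBl mul1mx mulmxBr mulmx1 iP subrr subr0.
rewrite frob2_idem // mulmxBl mul1mx linearB /= -frob2_idem //.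
by rewrite [frob2 X]frob2_tr lerBlDr lerDl frob2_ge0.
Qed.

Lemma frob2_scale p q (a : R) (A : 'M[R]_(p, q)) : frob2 (a *: A) = a ^+ 2 * frob2 A.
Proof.
rewrite /frob2 mulr_sumr; apply: eq_bigr=> i _; rewrite mulr_sumr.
by apply: eq_bigr=> j _; rewrite mxE exprMn.
Qed.

Lemma frob2_row p q1 q2 (A : 'M[R]_(p, q1)) (B : 'M[R]_(p, q2)) :
  frob2 (row_mx A B) = frob2 A + frob2 B.
Proof.
rewrite /frob2 -big_split /=; apply: eq_bigr=> i _.
rewrite big_split_ord /=; congr (_ + _); apply: eq_bigr=> j _.
  by rewrite row_mxEl.
by rewrite row_mxEr.
Qed.

End Frob.

Section LC.
Variable R : realType.
Local Notation C := (R[i]).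

Lemma left_corrB m n (lamA : 'I_(m ^ 2 - 1) -> 'M[C]_m) (lamB : 'I_(n ^ 2 - 1) -> 'M[C]_n)
  (A B : 'M[C]_(m * n)) :
  left_corr lamA lamB (A - B) = left_corr lamA lamB A - left_corr lamA lamB B.
Proof.
rewrite /left_corr -scalerBr opp_row_mx add_row_mx -scalerBr.
congr (_ *: row_mx _ (_ *: _)); apply/matrixP=> i j;
  by rewrite !mxE mulmxBr linearB /= raddfB /= mulrBr.
Qed.

End LC.

Section FL.
Variable R : realType.
Local Notation C := (R[i]).

Lemma Re_natr (k : nat) : complex.Re (k%:R : C) = k%:R.
Proof. by rewrite raddfMn. Qed.

Lemma ipZl p (A B : 'M[C]_p) c : ip ((c%:C)%C *: A) B = c * ip A B.
Proof. by rewrite ipC ipZr ipC. Qed.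

Lemma ip_herm p (X D : 'M[C]_p) : adjmx X = X -> ip X D = complex.Re (\tr (X *m D)).
Proof. by rewrite /ip => ->. Qed.

Lemma ip_tens m n (A1 A2 : 'M[C]_m) (B1 B2 : 'M[C]_n) :
  Defs.hermitian A1 -> Defs.hermitian B1 ->
  ip (A1 *t B1) (A2 *t B2) = complex.Re (\tr (A1 *m A2) * \tr (B1 *m B2)).
Proof. by move=> hA hB; rewrite /ip adjmx_tens hA hB tensmx_mul tr_tens. Qed.

Lemma frob2_lc m n (lamA : 'I_(m ^ 2 - 1) -> 'M[C]_m) (lamB : 'I_(n ^ 2 - 1) -> 'M[C]_n)
  (D : 'M[C]_(m * n)) :
  (0 < m)%N -> (0 < n)%N -> su_generators lamA -> su_generators lamB -> adjmx D = D ->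
  frob2 (left_corr lamA lamB D) <= complex.Re (\tr (D *m D)).
Proof.
move=> m0 n0 [hA [tA oA]] [hB [tB oB]] hD.
have mR : (m%:R : R) != 0 by rewrite pnatr_eq0 -lt0n.
have nR : (n%:R : R) != 0 by rewrite pnatr_eq0 -lt0n.
set c := Num.sqrt (2 / (m ^ 2 * n)%N%:R : R).
set c' := Num.sqrt (2 / n%:R : R).
have c2 : c ^+ 2 = 2 / (m%:R ^+ 2 * n%:R).
  by rewrite sqr_sqrtr ?divr_ge0 ?ler0n // natrM natrX.
have c'2 : c' ^+ 2 = 2 / n%:R by rewrite sqr_sqrtr ?divr_ge0 ?ler0n.
have h1 : Defs.hermitian (1%:M : 'M[C]_n) by exact: adjmx1.
pose s1 := c * (m%:R / 2).
pose s2 := c * c' * ((m * n)%:R / 4).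
pose f (x : ('I_(m ^ 2 - 1) + 'I_(m ^ 2 - 1) * 'I_(n ^ 2 - 1))%type) : 'M[C]_(m * n) :=
  match x with
  | inl i => (s1%:C)%C *: (lamA i *t 1%:M)
  | inr ij => (s2%:C)%C *: (lamA ij.1 *t lamB ij.2) end.
have -> : frob2 (left_corr lamA lamB D) = \sum_x (ip (f x) D) ^+ 2.
  rewrite big_sumType /=.
  rewrite -(pair_big xpredT xpredT (fun i j => ip (f (inr (i, j))) D ^+ 2)) /=.
  rewrite /left_corr frob2_scale frob2_row frob2_scale -/c -/c' mulrDr.
  congr (_ + _).
    rewrite mulr_sumr; apply: eq_bigr=> i _; rewrite big_ord1 !mxE ipZl ip_herm.
      by rewrite /s1; ring.
    by rewrite adjmx_tens hA adjmx1.
  rewrite mulrA mulr_sumr; apply: eq_bigr=> i _; rewrite mulr_sumr.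
  apply: eq_bigr=> j _; rewrite !mxE ipZl ip_herm.
    by rewrite /s2 /=; ring.
  by rewrite adjmx_tens hA hB.
have s1sq : s1 * s1 = (2 * n%:R)^-1.
  have -> : s1 * s1 = c ^+ 2 * (m%:R / 2) ^+ 2 by rewrite /s1; ring.
  by rewrite c2; field; rewrite mR nR.
have s2sq : s2 * s2 = 4^-1.
  have -> : s2 * s2 = c ^+ 2 * c' ^+ 2 * ((m * n)%:R / 4) ^+ 2 by rewrite /s2; ring.
  by rewrite c2 c'2 natrM; field; rewrite mR nR.
have orth : forall x y, ip (f x) (f y) = (x == y)%:R.
  case=> [i|[i j]] [k|[k l]] /=; rewrite ipZl ipZr ip_tens ?hA ?hB //.
  - rewrite mulrA s1sq oA mul1mx mxtrace1 -!natrM Re_natr.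
    have [->|ne] := eqVneq i k.
      by rewrite eqxx /= muln1 mulVf // natrM mulf_neq0 // pnatr_eq0.
    have ne' : (inl i == inl k :> ('I_(m ^ 2 - 1) + 'I_(m ^ 2 - 1) * 'I_(n ^ 2 - 1))%type) = false.
      by apply/eqP=> [[]] /eqP; rewrite (negbTE ne).
    by rewrite ne' /= muln0 mul0n mulr0.
  - by rewrite mul1mx tB mulr0 mulr0 mulr0.
  - by rewrite mulmx1 tB mulr0 mulr0 mulr0.
  - rewrite mulrA s2sq oA oB -!natrM Re_natr.
    have [->|ne1] := eqVneq i k; have [->|ne2] := eqVneq j l.
    + by rewrite eqxx /= mulVf // pnatr_eq0.
    + have -> : (inr (k, j) == inr (k, l) :> ('I_(m ^ 2 - 1) + 'I_(m ^ 2 - 1) * 'I_(n ^ 2 - 1))%type) = false.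
        by apply/eqP=> [[]] /eqP; rewrite (negbTE ne2).
      by rewrite /= !muln0 mulr0.
    + have -> : (inr (i, l) == inr (k, l) :> ('I_(m ^ 2 - 1) + 'I_(m ^ 2 - 1) * 'I_(n ^ 2 - 1))%type) = false.
        by apply/eqP=> [[]] /eqP; rewrite (negbTE ne1).
      by rewrite /= !muln0 mulr0.
    + have -> : (inr (i, j) == inr (k, l) :> ('I_(m ^ 2 - 1) + 'I_(m ^ 2 - 1) * 'I_(n ^ 2 - 1))%type) = false.
        by apply/eqP=> [[]] /eqP; rewrite (negbTE ne1).
      by rewrite /= !muln0 mulr0.
apply: le_trans (bessel D orth) _.
by rewrite /ip hD.
Qed.

End FL.

Section ZD.
Variable R : realType.
Local Notation C := (R[i]).

Lemma Re_mul_real (z w : C) : Num.conj z = z ->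
  complex.Re (z * w) = complex.Re z * complex.Re w.
Proof.
case: z=> a b; case: w=> c d /= [h].
have -> : b = 0 by lra.
by rewrite mul0r subr0.
Qed.

Lemma tr11 (A : 'M[C]_1) : \tr A = A 0 0.
Proof. by rewrite /mxtrace big_ord1. Qed.

Lemma tr_sum p I (r : seq I) (F : I -> 'M[C]_p) :
  \tr (\sum_(k <- r) F k) = \sum_(k <- r) \tr (F k).
Proof. by elim/big_rec2: _ => [|k x y _ <-]; rewrite ?mxtrace0 ?mxtraceD. Qed.

Lemma Re_sum I (r : seq I) (F : I -> C) :
  complex.Re (\sum_(k <- r) F k) = \sum_(k <- r) complex.Re (F k).
Proof. exact: raddf_sum. Qed.

Definition gval m (U : 'M[C]_m) (lam : 'M[C]_m) (k : 'I_m) : C :=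
  (adjmx (col k U) *m lam *m col k U) 0 0.

Lemma gval_real m (U : 'M[C]_m) lam k : Defs.hermitian lam ->
  Num.conj (gval U lam k) = gval U lam k.
Proof.
move=> hl; rewrite /gval -[X in _ = X](congr1 (fun M : 'M[C]_1 => M 0 0)
   (_ : adjmx (adjmx (col k U) *m lam *m col k U) = _)).
  by rewrite adjmxE.
by rewrite !adjmxM adjmxK hl mulmxA.
Qed.

Lemma tr_chi m n (U : 'M[C]_m) (p : 'I_m -> R) (rhoB : 'I_m -> 'M[C]_n)
   (lam : 'M[C]_m) (Y : 'M[C]_n) : Defs.hermitian lam ->
  complex.Re (\tr ((lam *t Y) *m
     \sum_k (((p k)%:C)%C *: ((col k U *m adjmx (col k U)) *t rhoB k)))) =
  \sum_k p k * (complex.Re (gval U lam k) * complex.Re (\tr (Y *m rhoB k))).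
Proof.
move=> hl; rewrite mulmx_sumr tr_sum Re_sum; apply: eq_bigr=> k _.
rewrite -scalemxAr tensmx_mul mxtraceZ Re_realM tr_tens; congr (_ * _).
have e : \tr (lam *m (col k U *m adjmx (col k U))) = gval U lam k.
  by rewrite mulmxA mxtrace_mulC mulmxA tr11.
by rewrite e Re_mul_real // gval_real.
Qed.

Lemma chi_herm m n (U : 'M[C]_m) (p : 'I_m -> R) (rhoB : 'I_m -> 'M[C]_n) :
  (forall k, is_state (rhoB k)) ->
  adjmx (\sum_k (((p k)%:C)%C *: ((col k U *m adjmx (col k U)) *t rhoB k))) =
  \sum_k (((p k)%:C)%C *: ((col k U *m adjmx (col k U)) *t rhoB k)).
Proof.
move=> hs; rewrite adjmx_sum; apply: eq_bigr=> k _.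
rewrite adjmxZR adjmx_tens adjmxM adjmxK; have [-> _] := hs k; by [].
Qed.

Lemma gval_sum m (U : 'M[C]_m) lam : adjmx U *m U = 1%:M ->
  \sum_k gval U lam k = \tr lam.
Proof.
move=> hU; have hU' := mulmx1C hU.
rewrite -[in RHS](mulmx1 lam) -hU' mulmxA mxtrace_mulC mulmxA.
rewrite /mxtrace; apply: eq_bigr=> k _; rewrite /gval !mxE.
apply: eq_bigr=> j _; rewrite !mxE; congr (_ * _).
by apply: eq_bigr=> l _; rewrite !mxE.
Qed.

End ZD.

Section Final.
Variable R : realType.
Local Notation C := (R[i]).

Lemma chi_proj m n (lamA : 'I_(m ^ 2 - 1) -> 'M[C]_m) (lamB : 'I_(n ^ 2 - 1) -> 'M[C]_n)
  (U : 'M[C]_m) (p : 'I_m -> R) (rhoB : 'I_m -> 'M[C]_n) :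
  (0 < m)%N -> su_generators lamA -> adjmx U *m U = 1%:M ->
  (forall k, is_state (rhoB k)) ->
  let chi := \sum_k (((p k)%:C)%C *: ((col k U *m adjmx (col k U)) *t rhoB k)) in
  exists P : 'M[R]_(m ^ 2 - 1), orth_proj (m - 1) P /\
    P *m left_corr lamA lamB chi = left_corr lamA lamB chi.
Proof.
move=> m0 [hA [tA oA]] hU hst chi.
pose V : 'M[R]_(m, m ^ 2 - 1) := \matrix_(k, i) complex.Re (gval U (lamA i) k).
have rV : (\rank V <= m - 1)%N.
  have hsum : (const_mx 1 : 'rV[R]_m) *m V = 0.
    apply/matrixP=> z i; rewrite !mxE.
    rewrite (eq_bigr (fun k => complex.Re (gval U (lamA i) k))) => [|k _]; last first.
      by rewrite !mxE mul1r.
    by rewrite -Re_sum gval_sum // tA.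
  have : \rank V != m.
    apply/negP=> /eqP hr; have fV : row_free V by rewrite /row_free hr.
    move: hsum => /eqP; rewrite mulmx_free_eq0 // => /eqP/matrixP/(_ 0 (Ordinal m0)).
    by rewrite !mxE => /eqP; rewrite oner_eq0.
  by have := rank_leq_row V; lia.
have hd : (\rank V <= m - 1 <= m ^ 2 - 1)%N.
  by rewrite rV /= leq_sub2r // -{1}[m]expn1 leq_pexp2l.
have [P [sP iP rP VP]] := proj_exists hd.
exists P; split; first by [].
pose W : 'M[R]_(m, 1 + (n ^ 2 - 1)) :=
  Num.sqrt (2 / (m ^ 2 * n)%N%:R) *: row_mx (\col_k (m%:R / 2 * p k))
   (Num.sqrt (2 / n%:R) *: \matrix_(k, j) ((m * n)%N%:R / 4 *
       (p k * complex.Re (\tr (lamB j *m rhoB k))))).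
have -> : left_corr lamA lamB chi = V^T *m W.
  rewrite /W -scalemxAr mul_mx_row -scalemxAr /left_corr.
  congr (_ *: row_mx _ (_ *: _)); apply/matrixP=> i j; rewrite !mxE.
    rewrite tr_chi // mulr_sumr; apply: eq_bigr=> k _.
    have [_ [_ t1]] := hst k.
    rewrite mul1mx t1 !mxE /=; ring.
  rewrite tr_chi // mulr_sumr; apply: eq_bigr=> k _.
  by rewrite !mxE; ring.
by rewrite mulmxA -{1}sP -trmx_mul VP.
Qed.

Lemma psd_rank1 p (w : 'cV[C]_p) : psd (w *m adjmx w).
Proof.
move=> v; rewrite mulmxA -(mulmxA (adjmx v *m w)).
have -> : adjmx w *m v = adjmx (adjmx v *m w) by rewrite adjmxM adjmxK.
set z := adjmx v *m w.
rewrite !mxE big_ord1 !mxE; exact: mul_conjC_ge0.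
Qed.

Lemma zd_exists m n : (0 < m)%N -> (0 < n)%N ->
  exists chi : 'M[C]_(m * n), zero_discord chi.
Proof.
case: m => // m _; case: n => // n _.
pose e : 'cV[C]_n.+1 := delta_mx 0 0.
eexists; exists 1%:M, (fun k => (k == ord0)%:R), (fun _ => e *m adjmx e).
split; first by rewrite adjmx1 mulmx1.
split; first by move=> k; rewrite ler0n.
split.
  by rewrite (bigD1 ord0) //= big1 ?addr0 // => k /negbTE ->.
split; last by reflexivity.
move=> _; split; first by rewrite /Defs.hermitian adjmxM adjmxK.
split; first exact: psd_rank1.
rewrite mxtrace_mulC tr11 !mxE (bigD1 ord0) //= big1.
  by rewrite !mxE eqxx /= rmorph1 mulr1 addr0.
by move=> j /negbTE nj; rewrite !mxE nj /= mulr0.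
Qed.

End Final.

Theorem mainTheorem2 (R : realType) (m n : nat)
  (lamA : 'I_(m ^ 2 - 1) -> 'M[R[i]]_m) (lamB : 'I_(n ^ 2 - 1) -> 'M[R[i]]_n)
  (rho : 'M[R[i]]_(m * n)) :
  su_generators lamA -> su_generators lamB -> is_state rho ->
  D_P lamA lamB rho <= @D_G R m n rho.
Proof.
move=> sA sB [hr [pr tr]].
have [m0 n0] : (0 < m)%N /\ (0 < n)%N.
  have : (m * n)%N != 0%N.
    apply/eqP=> h; move: tr; rewrite /mxtrace big1 => [/esym/eqP|i _].
      by rewrite oner_eq0.
    by have := ltn_ord i; rewrite {2}h.
  by rewrite muln_eq0 negb_or -!lt0n => /andP[].
apply: lb_le_inf.
  have [chi zc] := zd_exists R m0 n0.
  by exists (complex.Re (\tr ((rho - chi) *m (rho - chi)))), chi.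
move=> d [chi0 [[U [p [rhoB [hU [hp0 [hp1 [hst ->]]]]]]] ->]].
have [P [[sP [iP rP]] hP]] := chi_proj lamB p m0 sA hU hst.
set chi := \sum_k _ in hP *.
have hlb : has_lbound [set d | exists P : 'M[R]_(m ^ 2 - 1), orth_proj (m - 1) P /\
          d = frob2 (left_corr lamA lamB rho - P *m left_corr lamA lamB rho)].
  by exists 0 => y [Q [_ ->]]; apply: frob2_ge0.
apply: le_trans (ge_inf hlb _) _.
  by exists P.
have eT : left_corr lamA lamB rho - P *m left_corr lamA lamB rho =
    (1%:M - P) *m left_corr lamA lamB (rho - chi).
  by rewrite left_corrB mulmxBl mul1mx mulmxBr hP opprB addrA subrK.
rewrite eT; apply: le_trans (frob2_proj _ sP iP) _.
apply: frob2_lc => //.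
by rewrite adjmxB hr chi_herm.
Qed.
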